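(* Let $k$ be a field and $n\geq1$. Let $U=\{g(t_1)\cdots g(t_n): g(x)\in k[x],\ g(0)\neq0\}\subseteq k[s_1(t),\dots,s_n(t)]$ and $H_n=U^{-1}k[s_1(t),\dots,s_n(t)]$. Let $\psi\colon H_n\to A$ be a homomorphism of $k$-algebras, put $u_i=\psi(s_i(t))$ for $i=1,\dots,n$ and $F_n^\psi(x)=x^n-u_1x^{n-1}+\cdots+(-1)^nu_n\in A[x]$. Then the $A$-module $A\otimes_k k[x]_{(x)}/(F_n^\psi(x))$ is free of rank $n$ with a basis consisting of the classes of $1,x,\dots,x^{n-1}$. In particular, with $F_n(x)=x^n-s_1(t)x^{n-1}+\cdots+(-1)^ns_n(t)\in H_n[x]$, the $H_n$-module $H_n\otimes_k k[x]_{(x)}/(F_n(x))$ is free of rank $n$ with a basis consisting of the classes of $1,x,\dots,x^{n-1}$.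
   Context: $s_i(t)$ is the $i$-th elementary symmetric polynomial in the variables $t_1,\dots,t_n$ of the polynomial ring $k[t_1,\dots,t_n]$. $k[x]_{(x)}$ is the localization of $k[x]$ at the multiplicative set of polynomials $g(x)$ with $g(0)\neq0$; $A[x]=A\otimes_k k[x]$. *)

(* Defs.v *)
From HB Require Import structures.
From mathcomp Require Import all_boot all_order all_algebra.
From mathcomp Require Import mpoly.
Set Implicit Arguments. Unset Strict Implicit. Unset Printing Implicit Defensive.
Import Order.TTheory GRing.Theory.
Local Open Scope ring_scope.

Notation "x %:F" := (@FracField.tofrac _ x) : ring_scope.

(* The ring H_n = U^{-1} k[s_1(t),...,s_n(t)], realised inside the     *)
(* field of fractions K = k(t_1,...,t_n) of {mpoly k[n]}.              *)

(* s_i(t), the i-th elementary symmetric polynomial (s_0 = 1). *)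
Definition esym (k : fieldType) (n i : nat) : {mpoly k[n]} := mesym n k i.

Definition in_ksym (k : fieldType) (n : nat) (p : {mpoly k[n]}) : Prop :=
  exists q : {mpoly k[n]}, p = q \mPo [tuple esym k n i.+1 | i < n].

Definition Uelt (k : fieldType) (n : nat) (g : {poly k}) : {mpoly k[n]} :=
  \prod_(i < n) (map_poly (@mpolyC n k) g).['X_i].

Definition in_Hn (k : fieldType) (n : nat) (x : {fraction {mpoly k[n]}}) : Prop :=
  exists (f : {mpoly k[n]}) (g : {poly k}),
    [/\ in_ksym f, g.[0] != 0 & x = f%:F / (Uelt n g)%:F].

(* The module (B[x] localised at {g(x) : g in k[x], g(0) != 0}) / (F), *)
(* for a commutative ring B receiving k via iota, and its sub-version  *)
(* over a subring R of B (coefficients restricted to R).               *)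

Definition locS (k : fieldType) (B : comNzRingType) (iota : k -> B)
  (w : {poly B}) : Prop :=
  exists g : {poly k}, g.[0] != 0 /\ w = map_poly iota g.

(* p / g and q / h have the same class in R[x]_S / (F) :
   p/g - q/h = F * r / w, i.e. w * (p h - q g) = F * r for some w in S and
   r in R[x] (this is what equality of classes unfolds to). *)
Definition loc_congr (k : fieldType) (B : comNzRingType) (iota : k -> B)
  (R : B -> Prop) (F p g q h : {poly B}) : Prop :=
  exists (w r : {poly B}),
    [/\ locS iota w, (forall j, R r`_j) & w * (p * h - q * g) = F * r].

Definition loc_quot_basis (k : fieldType) (B : comNzRingType) (iota : k -> B)
  (R : B -> Prop) (F : {poly B}) (n : nat) : Prop :=
  (forall p g : {poly B}, (forall j, R p`_j) -> locS iota g ->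
     exists a : 'I_n -> B, (forall i, R (a i)) /\
       loc_congr iota R F p g (\sum_(i < n) a i *: 'X^i) 1)
  /\
  (forall a : 'I_n -> B, (forall i, R (a i)) ->
     loc_congr iota R F (\sum_(i < n) a i *: 'X^i) 1 0 1 ->
     forall i, a i = 0).

Definition Fpsi (k : fieldType) (n : nat) (A : comNzRingType)
  (psi : {fraction {mpoly k[n]}} -> A) : {poly A} :=
  \sum_(i < n.+1) ((-1) ^+ i * psi (esym k n i)%:F) *: 'X^(n - i).

(* Main.v *)
Require Import Defs.
From HB Require Import structures.
From mathcomp Require Import all_boot all_order all_algebra.
From mathcomp Require Import fingroup perm mpoly.
From mathcomp Require Import ring zify.
Import Order.TTheory GRing.Theory.
Local Open Scope ring_scope.


Record subR (B : comNzRingType) (R : B -> Prop) : Prop := SubR {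
  R0_ : R 0; R1_ : R 1; RD_ : forall x y, R x -> R y -> R (x + y);
  RN_ : forall x, R x -> R (- x); RM_ : forall x y, R x -> R y -> R (x * y) }.
Arguments subR {B}.

Section Generic.
Variable (B : comNzRingType) (R : B -> Prop).
Variable HR : subR R.
Let R0 := @R0_ _ _ HR.
Let R1 := @R1_ _ _ HR.
Let RD := @RD_ _ _ HR.
Let RN := @RN_ _ _ HR.
Let RM := @RM_ _ _ HR.

Definition polyR (p : {poly B}) := forall j, R p`_j.

Lemma R_sum (I : Type) (r : seq I) (P : pred I) (f : I -> B) :
  (forall i, P i -> R (f i)) -> R (\sum_(i <- r | P i) f i).
Proof. by move=> h; apply: big_ind. Qed.

Lemma polyR0 : polyR 0. Proof. by move=> j; rewrite coef0. Qed.
Lemma polyRC c : R c -> polyR c%:P.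
Proof. by move=> h j; rewrite coefC; case: (j == 0)%N. Qed.
Lemma polyR1 : polyR 1. Proof. exact: polyRC. Qed.
Lemma polyRD p q : polyR p -> polyR q -> polyR (p + q).
Proof. by move=> hp hq j; rewrite coefD; auto. Qed.
Lemma polyRN p : polyR p -> polyR (- p).
Proof. by move=> hp j; rewrite coefN; auto. Qed.
Lemma polyRM p q : polyR p -> polyR q -> polyR (p * q).
Proof. by move=> hp hq j; rewrite coefM; apply: R_sum => i _; auto. Qed.
Lemma polyRXn m : polyR 'X^m.
Proof. by move=> j; rewrite coefXn; case: (j == m)%N. Qed.
Lemma polyRZ c p : R c -> polyR p -> polyR (c *: p).
Proof. by move=> hc hp j; rewrite coefZ; auto. Qed.
Lemma polyR_sum (I : Type) (r : seq I) (P : pred I) (f : I -> {poly B}) :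
  (forall i, P i -> polyR (f i)) -> polyR (\sum_(i <- r | P i) f i).
Proof. move=> h; apply: big_ind => //; [exact: polyR0 | exact: polyRD]. Qed.
Lemma polyRX m p : polyR p -> polyR (p ^+ m).
Proof. move=> h; elim: m => [|m IH]; [exact: polyR1| rewrite exprS; exact: polyRM]. Qed.

Variable (F : {poly B}) (n : nat).
Hypotheses (Fmon : F \is monic) (Fsz : size F = n.+1) (FR : polyR F).

Lemma div_exists m : forall p : {poly B}, (size p <= m)%N -> polyR p ->
  exists q r, [/\ polyR q, polyR r, (size r <= n)%N & p = q * F + r].
Proof.
elim: m => [|m IH] p sp pR.
  exists 0, p; split => //; [exact: polyR0 | by apply: leq_trans sp _ | by rewrite mul0r add0r].
have [spn|spn] := leqP (size p) n.
  by exists 0, p; split => //; [exact: polyR0 | by rewrite mul0r add0r].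
have [spm|spm] := leqP (size p) m; first exact: IH.
have szp : size p = m.+1 by apply/eqP; rewrite eqn_leq sp spm.
have nm : (n <= m)%N by rewrite -ltnS -szp.
set c := p`_m.
set p' := p - (c *: 'X^(m - n)) * F.
have p'R : polyR p'.
  by apply: polyRD => //; apply: polyRN; apply: polyRM => //; apply: polyRZ; [exact: pR | exact: polyRXn].
have sp' : (size p' <= m)%N.
  apply/leq_sizeP => j hj.
  rewrite /p' coefB -scalerAl coefZ coefXnM.
  have -> : (j < m - n)%N = false by apply/negbTE; rewrite -leqNgt; apply: leq_trans hj; exact: leq_subr.
  have [jm|jm] := ltnP m j.
  - rewrite !nth_default ?szp ?mulr0 ?subr0 //; rewrite Fsz; lia.
  - have F1 : F`_n = 1 by move/monicP: Fmon; rewrite lead_coefE Fsz.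
    have -> : j = m by apply/eqP; rewrite eqn_leq hj jm.
    by rewrite subKn // F1 mulr1 subrr.
have [q [r [qR rR sr E]]] := IH _ sp' p'R.
exists (q + c *: 'X^(m - n)), r; split => //.
  by apply: polyRD => //; apply: polyRZ; [exact: pR | exact: polyRXn].
have -> : p = p' + c *: 'X^(m - n) * F by rewrite /p' subrK.
by rewrite E mulrDl; ring.
Qed.

Lemma exact_div u P : polyR P -> P = u * F -> polyR u.
Proof.
move=> PR PE; have [q [r [qR rR sr E]]] := div_exists _ _ (leqnn _) PR.
suff -> : u = q by [].
apply/eqP; rewrite -subr_eq0; apply/negPn/negP => nz.
have h : F * (u - q) = r by rewrite mulrBr mulrC -PE E (mulrC F) addrC addKr.
have := congr1 (fun p : {poly B} => size p) h; rewrite size_monicM // Fsz => e.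
by move: sr; rewrite -e addSn /= -{2}(addn0 n) leq_add2l leqn0 size_poly_eq0 (negbTE nz).
Qed.

Lemma coef_sumX (a : 'I_n -> B) (i : 'I_n) : (\sum_(l < n) a l *: 'X^l : {poly B})`_i = a i.
Proof.
rewrite coef_sum (bigD1 i) //= coefZ coefXn eqxx mulr1 big1 ?addr0 // => l hl.
by rewrite coefZ coefXn; case: eqP => [/val_inj e|]; [rewrite e eqxx in hl | rewrite mulr0].
Qed.

Lemma size_sumX (a : 'I_n -> B) : (size (\sum_(l < n) a l *: 'X^l : {poly B})%R <= n)%N.
Proof.
apply/leq_sizeP => j hj; rewrite coef_sum big1 // => l _.
by rewrite coefZ coefXn gtn_eqF ?mulr0 //; apply: leq_trans (ltn_ord l) hj.
Qed.

Variable (k : fieldType) (iota : k -> B).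
Hypotheses (Rio : forall c, R (iota c)) (io0 : iota 0 = 0) (io1 : iota 1 = 1).
Hypothesis HINV : forall g0 : {poly k}, g0.[0] != 0 ->
  exists v u, polyR v /\ v * map_poly iota g0 + u * F = 1.

Lemma GL : loc_quot_basis iota R F n.
Proof.
split.
- move=> p g pR [g0 [g00 ->]].
  have [v [u [vR E]]] := HINV _ g00.
  have gR : polyR (map_poly iota g0) by move=> j; rewrite coef_map_id0.
  have uR : polyR u.
    apply: (@exact_div u (1 - v * map_poly iota g0)).
      by apply: polyRD; [exact: polyR1| apply: polyRN; exact: polyRM].
    by rewrite -E addrC addKr.
  have [q [r [qR rR sr pE]]] := div_exists _ _ (leqnn _) (polyRM _ _ pR vR).
  exists (fun i : 'I_n => r`_i); split => //.
  have -> : \sum_(i < n) r`_i *: 'X^i = r.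
    rewrite -poly_def; apply/polyP => j; rewrite coef_poly; case: ltnP => // h.
    by rewrite nth_default //; exact: leq_trans sr h.
  exists 1, (p * u + q * map_poly iota g0); split.
  + exists 1; split; first by rewrite hornerC oner_neq0.
    by apply/polyP => j; rewrite coef_map_id0 // !coefC; case: (j == 0)%N.
  + by apply: polyRD; apply: polyRM.
  + have rE : r = p * v - q * F by rewrite pE addrC addKr.
    rewrite rE; apply/eqP; rewrite -subr_eq0; apply/eqP.
    set g1 := map_poly iota g0.
    have -> : 1 * (p * 1 - (p * v - q * F) * g1) - F * (p * u + q * g1) =
      p * (1 - (v * g1 + u * F)) by ring.
    by rewrite E subrr mulr0.
- move=> a aR [w [r [[g0 [g00 ->]] rR E]]] i.
  have [v [u [vR E2]]] := HINV _ g00.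
  set S := \sum_(i < n) a i *: 'X^i in E *.
  set g := map_poly iota g0 in E E2.
  have SE : S = F * (v * r + u * S).
    have -> : F * (v * r + u * S) = v * (g * (S * 1 - 0 * 1)) + (u * F) * S by rewrite E; ring.
    have uF : u * F = 1 - v * g by rewrite -E2 addrC addKr.
    by rewrite uF; ring.
  have S0 : S = 0.
    apply/eqP; apply/negPn/negP => nz.
    have nz2 : (v * r + u * S) != 0 by apply: contraNneq nz => h; rewrite SE h mulr0.
    have := size_sumX a; rewrite -/S SE size_monicM // Fsz.
    have := size_poly_gt0 (v * r + u * S); rewrite nz2 => /= s0.
    lia.
  by rewrite -(coef_sumX a i) -/S S0 coef0.
Qed.

End Generic.
Arguments polyR {B}.
Arguments R_sum {B R}.
Arguments polyR0 {B R}.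
Arguments polyRC {B R}.
Arguments polyR1 {B R}.
Arguments polyRD {B R}.
Arguments polyRN {B R}.
Arguments polyRM {B R}.
Arguments polyRXn {B R}.
Arguments polyRZ {B R}.
Arguments polyR_sum {B R}.
Arguments polyRX {B R}.
Arguments div_exists {B R}.
Arguments exact_div {B R}.
Arguments GL {B R}.


Lemma coefFsum (B : nzRingType) (h : nat -> B) n j :
  (\sum_(i < n.+1) h i *: 'X^(n - i) : {poly B})`_j =
  if (j <= n)%N then h (n - j)%N else 0.
Proof.
rewrite coef_sum; case: leqP => hj.
- rewrite (bigD1 (inord (n - j))) //= coefZ coefXn inordK ?ltnS ?leq_subr //.
  rewrite subKn // eqxx mulr1 big1 ?addr0 // => i hi.
  rewrite coefZ coefXn; case: eqP => [e|]; last by rewrite mulr0.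
  exfalso; move: hi; rewrite -val_eqE /= inordK ?ltnS ?leq_subr // => /eqP.
  have := ltn_ord i; lia.
- rewrite big1 // => i _; rewrite coefZ coefXn gtn_eqF ?mulr0 //.
  have := ltn_ord i; lia.
Qed.

Section Core.
Variable (k : fieldType) (n : nat).
Local Notation T := {mpoly k[n]}.
Local Notation K := {fraction T}.
Local Notation ks := (@in_ksym k n).
Implicit Types g : {poly k}.

Definition gT (g0 : {poly k}) : {poly T} := map_poly (@mpolyC n k) g0.
Definition cc (g0 : {poly k}) (i : 'I_n) : T := (gT g0).['X_i].

Lemma ksym0 : ks 0. Proof. by exists 0; rewrite comp_mpoly0. Qed.
Lemma ksymC c : ks c%:MP. Proof. by exists c%:MP; rewrite comp_mpolyC. Qed.
Lemma ksym1 : ks 1. Proof. by exists 1; rewrite comp_mpoly1. Qed.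
Lemma ksymD p q : ks p -> ks q -> ks (p + q).
Proof. by move=> [a ->] [b ->]; exists (a + b); rewrite comp_mpolyD. Qed.
Lemma ksymN p : ks p -> ks (- p).
Proof. by move=> [a ->]; exists (- a); rewrite comp_mpolyN. Qed.
Lemma ksymM p q : ks p -> ks q -> ks (p * q).
Proof. by move=> [a ->] [b ->]; exists (a * b); rewrite rmorphM. Qed.
Lemma sym_ksym (p : T) : p \is symmetric -> ks p.
Proof. by case/sym_fundamental => t [<- _]; exists t. Qed.

Lemma msymC s c : msym s (c%:MP : T) = c%:MP.
Proof. by rewrite -[c%:MP]mulr1 mul_mpolyC msymZ msym1. Qed.

Lemma msymXU s i : msym s ('X_i : T) = 'X_(s i).
Proof.
rewrite msymX; congr mpolyX; apply/mnmP => j; rewrite mnmE !mnm1E.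
by rewrite -(inj_eq (@perm_inj _ s)) permKV.
Qed.

Lemma msym_cc g0 s i : msym s (cc g0 i) = cc g0 (s i).
Proof.
rewrite /cc -horner_map /= msymXU; congr (_.[_]).
rewrite /gT -map_poly_comp; apply: eq_map_poly => c /=; exact: msymC.
Qed.

Lemma Usym (g0 : {poly k}) : Uelt n g0 \is symmetric.
Proof.
apply/issymP => s; rewrite /Uelt rmorph_prod.
rewrite [RHS](reindex_inj (@perm_inj _ s)) /=; apply: eq_bigr => i _.
exact: msym_cc.
Qed.

Lemma Uelt1 : Uelt n (1 : {poly k}) = 1.
Proof. by rewrite /Uelt rmorph1 big1 // => i _; rewrite hornerC. Qed.

Lemma UeltM (g1 g2 : {poly k}) : Uelt n (g1 * g2) = Uelt n g1 * Uelt n g2.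
Proof. by rewrite /Uelt -big_split /=; apply: eq_bigr => i _; rewrite rmorphM hornerM. Qed.

Lemma Uelt_neq0 (g0 : {poly k}) : g0.[0] != 0 -> Uelt n g0 != 0.
Proof.
move=> h; apply/negP => /eqP /(congr1 (meval (fun _ : 'I_n => (0 : k)))).
rewrite meval0 /Uelt rmorph_prod /= (eq_bigr (fun _ => g0.[0])).
  by rewrite prodr_const card_ord; apply/eqP; rewrite expf_neq0.
move=> i _; rewrite -horner_map /= mevalXU -map_poly_comp map_poly_id // => c _ /=.
exact: mevalC.
Qed.

Lemma ksR : subR ks.
Proof. split; [exact: ksym0 | exact: ksym1 | exact: ksymD | exact: ksymN | exact: ksymM]. Qed.

Lemma ks_sign m : ks ((-1) ^+ m).
Proof.
elim: m => [|m IH]; first exact: ksym1.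
by rewrite exprS; apply: ksymM => //; apply: ksymN; exact: ksym1.
Qed.

Definition Fm0 : {poly T} := \prod_(i < n) ('X - ('X_i)%:P).
Definition Pg g0 : {poly T} := \prod_(i < n) ('X - (cc g0 i)%:P).

Lemma Pg_sym g0 j : (Pg g0)`_j \is symmetric.
Proof.
apply/issymP => s; rewrite -(coef_map (msym s)).
suff -> : map_poly (msym s) (Pg g0) = Pg g0 by [].
rewrite /Pg rmorph_prod /= [RHS](reindex_inj (@perm_inj _ s)) /=; apply: eq_bigr => i _.
by rewrite map_polyXsubC /= msym_cc.
Qed.

Lemma gT_R g0 : polyR ks (gT g0).
Proof. by move=> j; rewrite /gT coef_map /=; exact: ksymC. Qed.

Lemma key g0 : exists W Q : {poly T},
  polyR ks Q /\ Fm0 * W = (Uelt n g0)%:P + gT g0 * Q.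
Proof.
have hE0 : forall i : 'I_n, exists h : {poly T},
    gT g0 - (cc g0 i)%:P = h * ('X - ('X_i)%:P).
  move=> i; apply/factor_theorem.
  by rewrite /root hornerD hornerN hornerC /cc subrr.
have [h hE] := fin_all_exists hE0.
have E1 : \prod_(i < n) (gT g0 - (cc g0 i)%:P) = (\prod_i h i) * Fm0.
  by rewrite /Fm0 -big_split /=; apply: eq_bigr => i _; exact: hE.
have E2 : \prod_(i < n) (gT g0 - (cc g0 i)%:P) = (map_poly polyC (Pg g0)).[gT g0].
  rewrite /Pg rmorph_prod horner_prod; apply: eq_bigr => i _.
  by rewrite raddfB /= map_polyX map_polyC /= hornerXsubC.
have szP : size (Pg g0) = n.+1 by rewrite /Pg size_prod_XsubC /index_enum unlock -enumT -cardT card_ord.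
set Q' := \sum_(j < n) ((Pg g0)`_j.+1)%:P * gT g0 ^+ j.
have E3 : (map_poly polyC (Pg g0)).[gT g0] = ((Pg g0)`_0)%:P + gT g0 * Q'.
  rewrite horner_coef size_map_polyC szP big_ord_recl /= coef_map /= expr0 mulr1.
  congr (_ + _); rewrite /Q' mulr_sumr; apply: eq_bigr => j _.
  by rewrite coef_map /= exprS; ring.
have E4 : (Pg g0)`_0 = (-1) ^+ n * Uelt n g0.
  rewrite -horner_coef0 /Pg horner_prod (eq_bigr (fun i => - cc g0 i)).
    by rewrite prodrN card_ord.
  by move=> i _; rewrite hornerXsubC sub0r.
set c : T := (-1) ^+ n.
exists (c%:P * \prod_i h i), (c%:P * Q'); split.
  apply: (polyRM ksR); first by apply: (polyRC ksR); exact: ks_sign.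
  apply: (polyR_sum ksR) => j _; apply: (polyRM ksR).
    by apply: (polyRC ksR); apply: sym_ksym; exact: Pg_sym.
  by apply: (polyRX ksR); exact: gT_R.
have cc1 : c%:P * c%:P = 1 :> {poly T}.
  by rewrite -polyCM /c -exprMn mulrNN mulr1 expr1n.
have -> : Fm0 * (c%:P * \prod_i h i) = c%:P * (\prod_i h i * Fm0) by ring.
rewrite -E1 E2 E3 E4 polyCM.
transitivity ((c%:P * c%:P) * (Uelt n g0)%:P + gT g0 * (c%:P * Q')); first by ring.
by rewrite cc1 mul1r.
Qed.
Local Notation tf := (@FracField.tofrac T).

Lemma mesym_eval m :
  (mesym n (T : idomainType) m).@[tnth [tuple ('X_i : T) | i < n]] = mesym n k m.
Proof.
rewrite !mesymE raddf_sum /=; apply: eq_bigr => h _.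
rewrite mevalX [RHS]mpolyXE_id; apply: eq_bigr => i _; by rewrite tnth_mktuple.
Qed.

Lemma size_Fm0 : size Fm0 = n.+1.
Proof. by rewrite /Fm0 size_prod_XsubC /index_enum unlock -enumT -cardT card_ord. Qed.

Lemma coef_Fm0 j : Fm0`_j = if (j <= n)%N then (-1) ^+ (n - j) * mesym n k (n - j)%N else 0.
Proof.
case: leqP => hj; last by rewrite nth_default // size_Fm0.
have := mroots_coeff [tuple ('X_i : T) | i < n] (inord (n - j)).
rewrite inordK ?ltnS ?leq_subr // subKn // big_tuple mesym_eval => <-.
rewrite /Fm0; apply: (congr1 (fun p : {poly T} => p`_j)).
by apply: eq_bigr => i _; rewrite tnth_mktuple.
Qed.

Lemma Vieta_K : map_poly tf Fm0 = Fpsi (fun x : K => x).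
Proof.
apply/polyP => j; rewrite coef_map /= coef_Fm0 /Fpsi.
rewrite (@coefFsum _ (fun i => (-1) ^+ i * (Defs.esym k n i)%:F)).
case: leqP => _; last by rewrite rmorph0.
by rewrite rmorphM rmorphXn rmorphN1.
Qed.

Lemma core g0 : g0.[0] != 0 -> exists v u : {poly K},
  polyR (@in_Hn k n) v /\
  v * map_poly (fun c : k => (c%:MP : T)%:F) g0 + u * Fpsi (fun x : K => x) = 1.
Proof.
move=> g00; have [W [Q [QR E]]] := key g0.
have Un0 := Uelt_neq0 _ g00.
set d : K := (Uelt n g0)%:F.
have dn0 : d != 0 by rewrite tofrac_eq0.
exists ((- d^-1)%:P * map_poly tf Q), (d^-1%:P * map_poly tf W); split.
  move=> j; rewrite coefCM coef_map /=.
  exists (- Q`_j), g0; split => //; first exact: ksymN.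
  by rewrite rmorphN /d !mulNr mulrC.
have Eg : map_poly tf (gT g0) = map_poly (fun c : k => (c%:MP : T)%:F) g0.
  by rewrite /gT -map_poly_comp.
rewrite -Vieta_K -Eg.
transitivity (d^-1%:P * (map_poly tf Fm0 * map_poly tf W - map_poly tf (gT g0) * map_poly tf Q)).
  by rewrite polyCN; ring.
rewrite -!rmorphM -rmorphB E addrK.
rewrite -[X in _ * X]/(map_poly tf (Uelt n g0)%:P) map_polyC /= -/d -polyCM mulVf //.
Qed.

Local Notation Hn := (@in_Hn k n).

Lemma Hn_ks f : ks f -> Hn f%:F.
Proof.
move=> hf; exists f, 1; split => //; first by rewrite hornerC oner_neq0.
by rewrite Uelt1 rmorph1 divr1.
Qed.

Lemma Hn0 : Hn 0. Proof. by have := Hn_ks _ ksym0; rewrite rmorph0. Qed.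
Lemma Hn1 : Hn 1. Proof. by have := Hn_ks _ ksym1; rewrite rmorph1. Qed.

Lemma HnN x : Hn x -> Hn (- x).
Proof.
move=> [f1 [g1 [h1 n1 ->]]]; exists (- f1), g1; split => //; first exact: ksymN.
by rewrite rmorphN mulNr.
Qed.

Lemma HnD x y : Hn x -> Hn y -> Hn (x + y).
Proof.
move=> [f1 [g1 [h1 n1 ->]]] [f2 [g2 [h2 n2 ->]]].
have u1 := Uelt_neq0 _ n1; have u2 := Uelt_neq0 _ n2.
exists (f1 * Uelt n g2 + f2 * Uelt n g1), (g1 * g2); split.
- by apply: ksymD; apply: ksymM => //; apply: sym_ksym; exact: Usym.
- by rewrite hornerM mulf_neq0.
- have v1 : (Uelt n g1)%:F != 0 by rewrite tofrac_eq0.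
  have v2 : (Uelt n g2)%:F != 0 by rewrite tofrac_eq0.
  rewrite UeltM tofracD !tofracM (addf_div _ _ v1 v2); reflexivity.
Qed.

Lemma HnM x y : Hn x -> Hn y -> Hn (x * y).
Proof.
move=> [f1 [g1 [h1 n1 ->]]] [f2 [g2 [h2 n2 ->]]].
have u1 := Uelt_neq0 _ n1; have u2 := Uelt_neq0 _ n2.
exists (f1 * f2), (g1 * g2); split.
- exact: ksymM.
- by rewrite hornerM mulf_neq0.
- have v1 : (Uelt n g1)%:F != 0 by rewrite tofrac_eq0.
  have v2 : (Uelt n g2)%:F != 0 by rewrite tofrac_eq0.
  rewrite UeltM !tofracM mulf_div; reflexivity.
Qed.

Lemma HnR : subR Hn.
Proof. split; [exact: Hn0 | exact: Hn1 | exact: HnD | exact: HnN | exact: HnM]. Qed.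

Lemma Hn_sign m : Hn ((-1) ^+ m).
Proof. by have := Hn_ks _ (ks_sign m); rewrite rmorphXn rmorphN1. Qed.

Lemma Hn_esym m : Hn (Defs.esym k n m)%:F.
Proof. by apply: Hn_ks; apply: sym_ksym; exact: mesym_sym. Qed.

Lemma Fpsi_coef (A : comNzRingType) (psi : K -> A) j :
  (Fpsi psi)`_j = if (j <= n)%N then (-1) ^+ (n - j) * psi (Defs.esym k n (n - j))%:F else 0.
Proof. by rewrite /Fpsi (@coefFsum _ (fun i => (-1) ^+ i * psi (Defs.esym k n i)%:F)). Qed.

Lemma Fpsi_monic (A : comNzRingType) (psi : K -> A) : psi 1 = 1 ->
  Fpsi psi \is monic /\ size (Fpsi psi) = n.+1.
Proof.
move=> psi1.
have cn : (Fpsi psi)`_n = 1.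
  by rewrite Fpsi_coef leqnn subnn expr0 mul1r /Defs.esym mesym0E rmorph1.
have sz : size (Fpsi psi) = n.+1.
  apply/eqP; rewrite eqn_leq; apply/andP; split.
    by apply/leq_sizeP => j hj; rewrite Fpsi_coef leqNgt hj.
  rewrite ltnNge; apply/negP => h; move: cn; rewrite nth_default // => /eqP.
  by rewrite eq_sym oner_eq0.
by split => //; apply/monicP; rewrite lead_coefE sz.
Qed.

Lemma FKR : polyR Hn (Fpsi (fun x : K => x)).
Proof.
move=> j; rewrite Fpsi_coef; case: ifP => _; last exact: Hn0.
by apply: HnM; [exact: Hn_sign | exact: Hn_esym].
Qed.

Lemma main_part2 : loc_quot_basis (fun c : k => (c%:MP : T)%:F)
    Hn (Fpsi (fun x : K => x)) n.
Proof.
have [FKmon FKsz] := @Fpsi_monic _ (fun x : K => x) erefl.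
apply: (@GL _ _ HnR (Fpsi (fun x : K => x)) n FKmon FKsz FKR k).
- by move=> c; apply: Hn_ks; exact: ksymC.
- by rewrite mpolyC0 rmorph0.
- by rewrite mpolyC1 rmorph1.
- exact: core.
Qed.

Section Part1.
Variables (A : comAlgType k) (psi : K -> A).
Hypothesis hD : forall x y, Hn x -> Hn y -> psi (x + y) = psi x + psi y.
Hypothesis hM : forall x y, Hn x -> Hn y -> psi (x * y) = psi x * psi y.
Hypothesis hC : forall c : k, psi (c%:MP : T)%:F = c%:A.

Lemma psi0 : psi 0 = 0.
Proof. by have := hC 0; rewrite mpolyC0 rmorph0 scale0r. Qed.
Lemma psi1 : psi 1 = 1.
Proof. by have := hC 1; rewrite mpolyC1 rmorph1 scale1r. Qed.
Lemma psiN1 : psi (-1) = -1.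
Proof. by have := hC (-1); rewrite mpolyCN mpolyC1 rmorphN rmorph1 scaleN1r. Qed.

Lemma psi_sum (I : Type) (r : seq I) (P : pred I) (f : I -> K) :
  (forall i, P i -> Hn (f i)) ->
  psi (\sum_(i <- r | P i) f i) = \sum_(i <- r | P i) psi (f i).
Proof.
move=> h.
have : Hn (\sum_(i <- r | P i) f i) /\ psi (\sum_(i <- r | P i) f i) = \sum_(i <- r | P i) psi (f i).
  apply: (big_ind2 (fun x y => Hn x /\ psi x = y)).
  - by split; [exact: Hn0 | exact: psi0].
  - move=> x1 x2 y1 y2 [hx <-] [hy <-]; split; [exact: HnD | exact: hD].
  - by move=> i Pi; split; [exact: h | ].
by case.
Qed.

Local Notation Psi := (map_poly psi).

Lemma PsiM p q : polyR Hn p -> polyR Hn q -> Psi (p * q) = Psi p * Psi q.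
Proof.
move=> hp hq; apply/polyP => i; rewrite coef_map_id0 ?psi0 // !coefM psi_sum.
  by apply: eq_bigr => j _; rewrite hM; [rewrite !coef_map_id0 ?psi0 | exact: hp | exact: hq].
by move=> j _; apply: HnM; [exact: hp | exact: hq].
Qed.

Lemma PsiD p q : polyR Hn p -> polyR Hn q -> Psi (p + q) = Psi p + Psi q.
Proof.
move=> hp hq; apply/polyP => i.
rewrite coefD !coef_map_id0 ?psi0 // coefD; apply: hD; [exact: hp | exact: hq].
Qed.

Lemma Psi1 : Psi 1 = 1.
Proof.
apply/polyP => i; rewrite coef_map_id0 ?psi0 // !coef1.
by case: (i == 0)%N; [exact: psi1 | exact: psi0].
Qed.

Lemma psi_sign m x : Hn x -> psi ((-1) ^+ m * x) = (-1) ^+ m * psi x.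
Proof.
move=> hx; rewrite hM; [|exact: Hn_sign|exact: hx].
rewrite -(signr_odd K m) -(signr_odd A m); case: (odd m).
  by rewrite !expr1 psiN1.
by rewrite !expr0 psi1.
Qed.

Lemma PsiF : Psi (Fpsi (fun x : K => x)) = Fpsi psi.
Proof.
apply/polyP => j; rewrite coef_map_id0 ?psi0 // !Fpsi_coef.
case: ifP => _; last exact: psi0.
by rewrite psi_sign //; exact: Hn_esym.
Qed.

Lemma Psig (g0 : {poly k}) :
  Psi (map_poly (fun c : k => (c%:MP : T)%:F) g0) = map_poly (fun c : k => c%:A) g0.
Proof.
have z1 : (fun c : k => (c%:MP : T)%:F) 0 = 0 by rewrite /= mpolyC0 rmorph0.
have z2 : (fun c : k => c%:A) 0 = (0 : A) by rewrite /= scale0r.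
apply/polyP => j.
by rewrite (coef_map_id0 _ _ psi0) (coef_map_id0 _ _ z1) (coef_map_id0 _ _ z2) /= hC.
Qed.

Lemma main_part1 : loc_quot_basis (fun c : k => c%:A) (fun _ : A => True) (Fpsi psi) n.
Proof.
have [Fmon Fsz] := @Fpsi_monic _ psi psi1.
have HR : subR (fun _ : A => True) by split.
have [FKmon FKsz] := @Fpsi_monic _ (fun x : K => x) erefl.
apply: (@GL _ _ HR (Fpsi psi) n Fmon Fsz (fun _ => I) k).
- by [].
- exact: scale0r.
- exact: scale1r.
move=> g0 g00; have [v [u [vR E]]] := core _ g00.
set gK := map_poly (fun c : k => (c%:MP : T)%:F) g0 in E.
have gKR : polyR Hn gK.
  have z1 : (fun c : k => (c%:MP : T)%:F) 0 = 0 by rewrite /= mpolyC0 rmorph0.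
  by move=> j; rewrite /gK (coef_map_id0 _ _ z1); apply: Hn_ks; exact: ksymC.
have uR : polyR Hn u.
  apply: (@exact_div _ _ HnR _ n FKmon FKsz FKR u (1 - v * gK)).
    by apply: (polyRD HnR); [exact: (polyR1 HnR) | apply: (polyRN HnR); exact: (polyRM HnR)].
  by rewrite -E addrC addKr.
exists (Psi v), (Psi u); split; first by move=> j.
rewrite -Psig -PsiF -/gK -(PsiM _ _ vR gKR) -(PsiM _ _ uR FKR) -PsiD.
- by rewrite E Psi1.
- exact: (polyRM HnR _ _ vR gKR).
- exact: (polyRM HnR _ _ uR FKR).
Qed.

End Part1.

End Core.

Theorem proposition4p2 (k : fieldType) (n : nat) (hn : (0 < n)%N) :
  (* general case: any k-algebra homomorphism psi : H_n -> A *)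
  (forall (A : comAlgType k) (psi : {fraction {mpoly k[n]}} -> A),
     (forall x y, in_Hn x -> in_Hn y -> psi (x + y) = psi x + psi y) ->
     (forall x y, in_Hn x -> in_Hn y -> psi (x * y) = psi x * psi y) ->
     (forall c : k, psi (c%:MP)%:F = c%:A) ->
     loc_quot_basis (fun c : k => c%:A) (fun _ : A => True) (Fpsi psi) n)
  /\
  (* particular case A = H_n, psi = id *)
  loc_quot_basis (fun c : k => (c%:MP : {mpoly k[n]})%:F)
    (@in_Hn k n) (Fpsi (fun x : {fraction {mpoly k[n]}} => x)) n.
Proof.
split.
  move=> A psi hD hM hC; exact: (@main_part1 k n A psi hD hM hC).
exact: (@main_part2 k n).
Qed.
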